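(* Let $G$ be a weakly-reversible chemical reaction network in $s$ species that is not catalytic. Then $V_{\mathbb{R}}(\mathcal{E}_G)\cap\mathbb{R}^s_{>0}$ is dense, in the Euclidean topology, in $V_{\mathbb{R}}(\mathcal{E}_G)\cap\mathbb{R}^s_{\ge0}$.
   Context: A chemical reaction network (CRN) consists of positive integers $s,n$, a finite directed graph $G$ with vertex set $\{1,\dots,n\}$ and edge set $E(G)$, and an injective labeling of vertex $i$ by a monic monomial $\psi_i=\prod_{j=1}^s x_j^{y_{ij}}$. $G$ is weakly-reversible iff each connected component is strongly connected. The associated event-system $\mathcal{E}_G$ is the set of binomials $\psi_i-\psi_j$, one for each pair $\{i,j\}$ with $(i,j)\in E(G)$ or $(j,i)\in E(G)$; $V_{\mathbb{R}}(\mathcal{E}_G)$ is its real zero set in $\mathbb{R}^s$. The event-graph $\overline{G}$ has as vertices all monic monomials in $x_1,\dots,x_s$, with an edge $(N\psi_i,N\psi_j)$ for each $(i,j)\in E(G)$ and each monic monomial $N$. A weakly-reversible CRN is catalytic iff there exist monic monomials $M,N$ path-connected in $\overline{G}$ such that $M/\gcd(M,N)$ and $N/\gcd(M,N)$ are not path-connected in $\overline{G}$. *)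

(* Defs.v *)
From HB Require Import structures.
From mathcomp Require Import all_boot all_order all_algebra.
From mathcomp Require Import all_classical all_reals all_analysis.
From Stdlib Require Import Relations.
Set Implicit Arguments. Unset Strict Implicit. Unset Printing Implicit Defensive.
Import Order.TTheory GRing.Theory Num.Theory.
Import numFieldNormedType.Exports.
Local Open Scope ring_scope.

(* A CRN: vertices 'I_n, directed edge relation e : rel 'I_n, and labels
   y : 'I_n -> {ffun 'I_s -> nat}, the exponent vector of the monic monomial
   psi_i = prod_j x_j ^ (y i j).  Monic monomials in x_1..x_s are identified
   with their exponent vectors {ffun 'I_s -> nat}. *)

Definition sym_edge (n : nat) (e : rel 'I_n) : rel 'I_n :=
  fun u v => e u v || e v u.

Definition weakly_reversible (n : nat) (e : rel 'I_n) : Prop :=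
  forall u v : 'I_n, connect (sym_edge e) u v -> connect e u v.

Definition mono_mul (s : nat) (M N : {ffun 'I_s -> nat}) : {ffun 'I_s -> nat} :=
  [ffun k => (M k + N k)%N].

Definition mono_div_gcd (s : nat) (M N : {ffun 'I_s -> nat}) : {ffun 'I_s -> nat} :=
  [ffun k => (M k - minn (M k) (N k))%N].

Definition event_edge (s n : nat) (e : rel 'I_n) (y : 'I_n -> {ffun 'I_s -> nat})
    (M M' : {ffun 'I_s -> nat}) : Prop :=
  exists (i j : 'I_n) (N : {ffun 'I_s -> nat}),
    e i j /\ M = mono_mul N (y i) /\ M' = mono_mul N (y j).

Definition event_connected (s n : nat) (e : rel 'I_n) (y : 'I_n -> {ffun 'I_s -> nat}) :
    relation {ffun 'I_s -> nat} :=
  clos_refl_trans _ (fun M M' => event_edge e y M M' \/ event_edge e y M' M).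

Definition catalytic (s n : nat) (e : rel 'I_n) (y : 'I_n -> {ffun 'I_s -> nat}) : Prop :=
  exists M N : {ffun 'I_s -> nat},
    event_connected e y M N /\
    ~ event_connected e y (mono_div_gcd M N) (mono_div_gcd N M).

Definition mono_eval (R : realType) (s : nat) (a : {ffun 'I_s -> nat}) (x : 'rV[R]_s) : R :=
  \prod_(k < s) (x ord0 k) ^+ (a k).

Definition event_variety (R : realType) (s n : nat) (e : rel 'I_n)
    (y : 'I_n -> {ffun 'I_s -> nat}) : set 'rV[R]_s :=
  [set x | forall i j : 'I_n, (e i j || e j i) -> mono_eval (y i) x = mono_eval (y j) x].

Definition pos_orthant (R : realType) (s : nat) : set 'rV[R]_s :=
  [set x | forall k : 'I_s, (0 < x ord0 k)%R].

Definition nonneg_orthant (R : realType) (s : nat) : set 'rV[R]_s :=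
  [set x | forall k : 'I_s, (0 <= x ord0 k)%R].

(* Main.v *)
Require Import Defs.
From HB Require Import structures.
From mathcomp Require Import all_boot all_order all_algebra.
From mathcomp Require Import all_classical all_reals all_analysis.
From mathcomp Require Import zify ring lra.
From Stdlib Require Import Relations.
Import Order.TTheory GRing.Theory Num.Theory.
Import numFieldNormedType.Exports.
Set Implicit Arguments. Unset Strict Implicit. Unset Printing Implicit Defensive.
Local Open Scope classical_set_scope.
Local Open Scope ring_scope.

Section FM.
Variable F : realFieldType.

Definition dot (d : nat) (r : nat -> int) (u : nat -> F) : F :=
  \sum_(k < d) (r k)%:~R * u k.

Definition okrow (b : bool) (a : F) : bool := if b then 0 < a else 0 <= a.

Definition bad (X : Type) (str : X -> bool) (cst : X -> F) (l : seq X) : bool :=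
  if has str l then \sum_(x <- l) cst x <= 0 else \sum_(x <- l) cst x < 0.

Lemma okrowW b a : okrow b a -> 0 <= a.
Proof. by case: b => //= /ltW. Qed.

Lemma okrow_gt0 b a : 0 < a -> okrow b a.
Proof. by case: b => //= /ltW. Qed.

Lemma okrow_pmul b c a : 0 < c -> okrow b (c * a) = okrow b a.
Proof. by case: b => /= hc; rewrite ?pmulr_rgt0 ?pmulr_rge0. Qed.

Lemma argmax (X : eqType) (f : X -> F) (l : seq X) : l != [::] ->
  exists2 p, p \in l & forall q, q \in l -> f q <= f p.
Proof.
elim: l => // a l IH _.
case: (eqVneq l [::]) => [->|/IH [p pl hp]].
  by exists a; rewrite ?mem_head // => q; rewrite inE => /eqP ->.
case: (leP (f a) (f p)) => h.
  exists p; first by rewrite inE pl orbT.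
  by move=> q; rewrite inE => /orP [/eqP -> // | /hp].
exists a; first exact: mem_head.
move=> q; rewrite inE => /orP [/eqP -> // | /hp hq].
exact: (le_trans hq (ltW h)).
Qed.

Lemma interval (X : eqType) (lo up : seq X) (L U : X -> F) (sl su : X -> bool) :
  (forall p q, p \in lo -> q \in up -> okrow (sl p || su q) (U q - L p)) ->
  exists t, (forall p, p \in lo -> okrow (sl p) (t - L p)) /\
            (forall q, q \in up -> okrow (su q) (U q - t)).
Proof.
move=> H.
case: (eqVneq lo [::]) => [->|lo0].
  case: (eqVneq up [::]) => [->|up0]; first by exists 0.
  have [q0 q0u hq0] := argmax (fun q => - U q) up0.
  exists (U q0 - 1); split => // q /hq0 hq; apply: okrow_gt0.
  rewrite lerN2 in hq; lra.
case: (eqVneq up [::]) => [->|up0].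
  have [p0 p0l hp0] := argmax L lo0.
  exists (L p0 + 1); split => // p /hp0 hp; apply: okrow_gt0; lra.
have [p0 p0l hp0] := argmax L lo0.
have [q0 q0u hq0] := argmax (fun q => - U q) up0.
have H00 := okrowW (H _ _ p0l q0u).
exists ((L p0 + U q0) / 2); split.
  move=> p pl; have hp := hp0 _ pl; have := H _ _ pl q0u.
  by case: (sl p) => /=; lra.
move=> q qu; have hq := hq0 _ qu; rewrite lerN2 in hq; have := H _ _ p0l qu.
by case: (su q); rewrite ?orbT /=; lra.
Qed.

Lemma sum_nseq (V : nmodType) (X : Type) (g : X -> V) n a :
  \sum_(x <- nseq n a) g x = g a *+ n.
Proof. by rewrite big_nseq; elim: n => //= n ->; rewrite mulrS. Qed.

Lemma intr_muln (z : int) n : ((z *+ n)%:~R : F) = z%:~R *+ n.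
Proof. by elim: n => // n IH; rewrite !mulrS intrD IH. Qed.

Lemma absz_neg (z : int) : z < 0 -> ((absz z)%:R : F) = - z%:~R.
Proof. by move=> h; rewrite pmulrn ltz0_abs // intrN. Qed.

Lemma absz_pos (z : int) : 0 < z -> ((absz z)%:R : F) = z%:~R.
Proof. by move=> h; rewrite pmulrn gtz0_abs. Qed.

Lemma cancel_pn (z w : int) : 0 < z -> w < 0 -> z *+ absz w + w *+ absz z = 0.
Proof.
move=> hz hw; rewrite !pmulrn !mulrzz ltz0_abs // gtz0_abs //.
by rewrite mulrN mulrC addNr.
Qed.

Lemma mulrn_absz_neg (x : F) (z : int) : z < 0 -> x *+ absz z = x * (- z%:~R).
Proof. by move=> h; rewrite -mulr_natr absz_neg. Qed.

Lemma mulrn_absz_pos (x : F) (z : int) : 0 < z -> x *+ absz z = x * z%:~R.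
Proof. by move=> h; rewrite -mulr_natr absz_pos. Qed.

Lemma has_flatten (T : Type) (a : pred T) (ss : seq (seq T)) :
  has a (flatten ss) = has (has a) ss.
Proof. by elim: ss => //= s ss IH; rewrite has_cat IH. Qed.

Lemma dotS d r (u' : nat -> F) t :
  dot d.+1 r (fun k => if k == d then t else u' k) = dot d r u' + (r d)%:~R * t.
Proof.
rewrite /dot big_ord_recr /= eqxx; congr (_ + _).
by apply: eq_bigr => k _ /=; rewrite ltn_eqF.
Qed.

Lemma FM (d : nat) : forall (X : eqType) (row : X -> nat -> int) (cst : X -> F)
  (str : X -> bool) (sys : seq X),
  (exists u : nat -> F, forall x, x \in sys -> okrow (str x) (dot d (row x) u + cst x))
  \/ (exists l : seq X, {subset l <= sys} /\
        (forall k, (k < d)%N -> \sum_(x <- l) row x k = 0) /\ bad str cst l).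
Proof.
elim: d => [|d IH] X row cst str sys.
  case: (boolP (all (fun x => okrow (str x) (cst x)) sys)) => [/allP H|].
    by left; exists (fun=> 0) => x /H; rewrite /dot big_ord0 add0r.
  move/allPn => [x xs hx]; right; exists [:: x]; split.
    by move=> z; rewrite inE => /eqP ->.
  split => //; rewrite /bad /= big_seq1 orbF.
  by move: hx; case: (str x) => /=; rewrite ?ltNge ?leNgt ?negbK.
pose P := [seq x <- sys | 0 < row x d].
pose N := [seq x <- sys | row x d < 0].
pose Zs := [seq x <- sys | row x d == 0].
pose X' := (X + (X * X))%type.
pose row' (z : X') : nat -> int := match z with inl x => row x
  | inr pq => fun k => row pq.1 k *+ absz (row pq.2 d) + row pq.2 k *+ absz (row pq.1 d) end.
pose cst' (z : X') : F := match z with inl x => cst x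
  | inr pq => cst pq.1 *+ absz (row pq.2 d) + cst pq.2 *+ absz (row pq.1 d) end.
pose str' (z : X') : bool := match z with inl x => str x
  | inr pq => str pq.1 || str pq.2 end.
pose sys' : seq X' := map inl Zs ++ [seq inr (p, q) | p <- P, q <- N].
have memsys' : forall z, z \in sys' ->
    (exists2 x, x \in Zs & z = inl x) \/ (exists p q, [/\ p \in P, q \in N & z = inr (p, q)]).
  move=> z; rewrite mem_cat => /orP [/mapP [x xz ->]|/allpairsP [[p q] [/= pP qN ->]]].
    by left; exists x.
  by right; exists p, q.
have [[u' Hu']|[l' [l's [l0 lbad]]]] := IH X' row' cst' str' sys'; last first.
  pose ex (z : X') : seq X := match z with inl x => [:: x]
    | inr pq => nseq (absz (row pq.2 d)) pq.1 ++ nseq (absz (row pq.1 d)) pq.2 end.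
  have sum_ex : forall (V : nmodType) (g : X -> V),
      \sum_(x <- flatten (map ex l')) g x = \sum_(z <- l') \sum_(x <- ex z) g x.
    by move=> V g; rewrite big_flatten /= big_map.
  have exrow : forall z k, \sum_(x <- ex z) row x k = row' z k.
    by case=> [x|[p q]] k /=; rewrite ?big_seq1 // big_cat /= !sum_nseq.
  have excst : forall z, \sum_(x <- ex z) cst x = cst' z.
    by case=> [x|[p q]] /=; rewrite ?big_seq1 // big_cat /= !sum_nseq.
  have exhas : forall z, z \in l' -> has str (ex z) = str' z.
    move=> z /l's /memsys' [[x _ ->]|[p [q [pP qN ->]]]] /=; first by rewrite orbF.
    rewrite mem_filter in pP; rewrite mem_filter in qN.
    case/andP: pP => pP _; case/andP: qN => qN _.
    rewrite has_cat !has_nseq !absz_gt0 /= (gt_eqF pP) (lt_eqF qN) //.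
  right; exists (flatten (map ex l')); split.
    move=> x /flattenP [sx /mapP [z zl ->]].
    move: (l's _ zl) => /memsys' [[x0 x0Z ->]|[p [q [pP qN ->]]]] /=.
      by rewrite inE => /eqP ->; move: x0Z; rewrite mem_filter => /andP [].
    rewrite mem_cat !mem_nseq => /orP [/andP [_ /eqP ->]|/andP [_ /eqP ->]].
      by move: pP; rewrite mem_filter => /andP [].
    by move: qN; rewrite mem_filter => /andP [].
  split.
    move=> k; rewrite ltnS leq_eqVlt => /orP [/eqP ->|kd]; last first.
      by rewrite sum_ex -[RHS](l0 k kd); apply: eq_bigr => z _; rewrite exrow.
    rewrite sum_ex big_seq big1 // => z zl; rewrite exrow.
    move: (l's _ zl) => /memsys' [[x0 x0Z ->]|[p [q [pP qN ->]]]] /=.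
      by move: x0Z; rewrite mem_filter => /andP [/eqP].
    move: pP qN; rewrite !mem_filter => /andP [pP _] /andP [qN _].
    exact: cancel_pn.
  rewrite /bad has_flatten has_map (eq_in_has exhas) sum_ex.
  under eq_bigr do rewrite excst.
  exact: lbad.
pose a x := dot d (row x) u' + cst x.
pose L x := - a x / (row x d)%:~R.
pose U x := a x / (- (row x d)%:~R).
have compat : forall p q, p \in P -> q \in N -> okrow (str p || str q) (U q - L p).
  move=> p q pP qN.
  have hz : inr (p, q) \in sys' by rewrite mem_cat; apply/orP; right; apply/allpairsP; exists (p, q).
  have := Hu' _ hz; rewrite /= /dot.
  move: pP qN; rewrite !mem_filter => /andP [pP _] /andP [qN _].
  have e1 : \sum_(k < d) (row p k *+ `|row q d| + row q k *+ `|row p d|)%:~R * u' k +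
      (cst p *+ `|row q d| + cst q *+ `|row p d|) =
      (((row p d)%:~R * (- (row q d)%:~R)) : F) * (U q - L p).
    have lin : \sum_(k < d) (row p k *+ `|row q d| + row q k *+ `|row p d|)%:~R * u' k
        = dot d (row p) u' *+ `|row q d| + dot d (row q) u' *+ `|row p d|.
      rewrite /dot -!sumrMnl -big_split; apply: eq_bigr => k _.
      by rewrite intrD !intr_muln mulrDl !mulrnAl.
    rewrite lin /U /L /a !(mulrn_absz_neg _ qN) !(mulrn_absz_pos _ pP).
    have hp : ((row p d)%:~R : F) != 0 by rewrite intr_eq0 gt_eqF.
    have hq : ((row q d)%:~R : F) != 0 by rewrite intr_eq0 lt_eqF.
    field; rewrite ?oppr_eq0; exact/andP.
  rewrite e1 okrow_pmul //.
  by apply: mulr_gt0; rewrite ?oppr_gt0 ?ltr0z ?ltrz0.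
have [t [ht1 ht2]] := interval compat.
left; exists (fun k => if k == d then t else u' k) => x xs.
rewrite dotS -addrAC -/(a x).
case: (ltgtP 0 (row x d)) => hr.
- have xP : x \in P by rewrite mem_filter hr.
  have := ht1 _ xP.
  have -> : a x + (row x d)%:~R * t = (row x d)%:~R * (t - L x).
    rewrite /L; field; by rewrite intr_eq0 gt_eqF.
  by rewrite okrow_pmul // ltr0z.
- have xN : x \in N by rewrite mem_filter hr.
  have := ht2 _ xN.
  have -> : a x + (row x d)%:~R * t = (- (row x d)%:~R) * (U x - t).
    rewrite /U; field; by rewrite ?oppr_eq0 intr_eq0 lt_eqF.
  by rewrite okrow_pmul // oppr_gt0 ltrz0.
- have xZ : inl x \in sys' by rewrite mem_cat map_f // mem_filter -hr eqxx.
  by have := Hu' _ xZ; rewrite -hr mul0r addr0.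
Qed.

End FM.
Section Comb.
Variables (s n : nat) (e : rel 'I_n) (y : 'I_n -> {ffun 'I_s -> nat}).
Local Notation conn := (event_connected e y).
Hypothesis ncat : ~ catalytic e y.

Lemma conn_add M N C : conn M N -> conn (mono_mul M C) (mono_mul N C).
Proof.
elim=> [A B [[i [j [P [hij [-> ->]]]]]|[i [j [P [hij [-> ->]]]]]]| A | A B D _ IH1 _ IH2].
- apply: rt_step; left; exists i, j, (mono_mul P C); split => //.
  by split; apply/ffunP => k; rewrite !ffunE addnAC.
- apply: rt_step; right; exists i, j, (mono_mul P C); split => //.
  by split; apply/ffunP => k; rewrite !ffunE addnAC.
- exact: rt_refl.
- exact: rt_trans IH1 IH2.
Qed.

Lemma conn_cancel M N C : conn (mono_mul M C) (mono_mul N C) -> conn M N.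
Proof.
move=> H.
have H2 : conn (mono_div_gcd (mono_mul M C) (mono_mul N C))
               (mono_div_gcd (mono_mul N C) (mono_mul M C)).
  case: (pselect (conn (mono_div_gcd (mono_mul M C) (mono_mul N C))
               (mono_div_gcd (mono_mul N C) (mono_mul M C)))) => // hn.
  by exfalso; apply: ncat; exists (mono_mul M C), (mono_mul N C).
pose G : {ffun 'I_s -> nat} := [ffun k => minn (M k) (N k)].
have eM : M = mono_mul (mono_div_gcd (mono_mul M C) (mono_mul N C)) G.
  by apply/ffunP=> k; rewrite /mono_div_gcd /mono_mul !ffunE -addn_minl subnDr subnK // geq_minl.
have eN : N = mono_mul (mono_div_gcd (mono_mul N C) (mono_mul M C)) G.
  by apply/ffunP=> k; rewrite /mono_div_gcd /mono_mul !ffunE [minn (M k) _]minnC -addn_minl subnDr subnK // geq_minl.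
rewrite {1}eM {2}eN; exact: conn_add.
Qed.

Definition sdelta (t : ('I_n * 'I_n) * bool) (k : 'I_s) : int :=
  if t.2 then (y t.1.1 k)%:Z - (y t.1.2 k)%:Z else (y t.1.2 k)%:Z - (y t.1.1 k)%:Z.

Lemma sdelta_flip p b k : sdelta (p, ~~ b) k = - sdelta (p, b) k.
Proof. by case: b; rewrite /sdelta /= opprB. Qed.

Lemma conn_comb (l : seq (('I_n * 'I_n) * bool)) :
  (forall t, t \in l -> e t.1.1 t.1.2) ->
  forall M N : {ffun 'I_s -> nat},
  (forall k, (M k)%:Z - (N k)%:Z = \sum_(t <- l) sdelta t k) -> conn M N.
Proof.
elim: l => [|t l IH] hl M N hMN.
  have -> : M = N.
    by apply/ffunP => k; move: (hMN k); rewrite big_nil => /eqP; rewrite subr_eq0 => /eqP [].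
  exact: rt_refl.
have hl' : forall t, t \in l -> e t.1.1 t.1.2.
  by move=> t' ht'; apply: hl; rewrite inE ht' orbT.
case: t hl hMN => [[i j] b] hl hMN.
have eij : e i j := hl _ (mem_head _ _).
case: b hl hMN => hl hMN.
- apply: (@conn_cancel M N (y j)).
  apply: (@rt_trans _ _ _ (mono_mul N (y i))).
    apply: IH => // k; rewrite !ffunE; move: (hMN k); rewrite big_cons /sdelta /=; lia.
  by apply: rt_step; left; exists i, j, N.
- apply: (@conn_cancel M N (y i)).
  apply: (@rt_trans _ _ _ (mono_mul N (y j))).
    apply: IH => // k; rewrite !ffunE; move: (hMN k); rewrite big_cons /sdelta /=; lia.
  by apply: rt_step; right; exists i, j, N.
Qed.

Lemma eval_mul (R : realType) M N (x : 'rV[R]_s) :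
  mono_eval (mono_mul M N) x = mono_eval M x * mono_eval N x.
Proof.
by rewrite /mono_eval -big_split; apply: eq_bigr => k _; rewrite ffunE exprD.
Qed.

Lemma conn_eval (R : realType) (x : 'rV[R]_s) M N :
  event_variety e y x -> conn M N -> mono_eval M x = mono_eval N x.
Proof.
move=> hx.
elim=> [A B [[i [j [P [hij [-> ->]]]]]|[i [j [P [hij [-> ->]]]]]]| A | A B D _ IH1 _ IH2].
- by rewrite !eval_mul (hx i j) // hij.
- by rewrite !eval_mul (hx i j) // hij.
- by [].
- by rewrite IH1 IH2.
Qed.

End Comb.
Lemma intr_natE (F : pzRingType) (m : nat) : ((m%:Z)%:~R : F) = m%:R.
Proof. by rewrite pmulrn. Qed.

Lemma intr_sum (F : pzRingType) (I : Type) (l : seq I) (f : I -> int) :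
  ((\sum_(t <- l) f t)%:~R : F) = \sum_(t <- l) (f t)%:~R.
Proof. by elim: l => [|a l IH]; rewrite ?big_nil ?big_cons ?intrD ?IH. Qed.

Section Main.
Variables (R : realType) (s n : nat) (e : rel 'I_n) (y : 'I_n -> {ffun 'I_s -> nat}).
Hypothesis ncat : ~ catalytic e y.
Variable x : 'rV[R]_s.
Hypothesis hxV : event_variety e y x.
Hypothesis hx0 : nonneg_orthant x.
Local Notation conn := (event_connected e y).
Local Notation xs k := (x ord0 k).
Local Notation T := (('I_n * 'I_n) * bool)%type.

Definition zb (k : 'I_s) : bool := xs k == 0.

Lemma pos_of_nz k : ~~ zb k -> 0 < xs k.
Proof. by rewrite lt0r /zb => ->; exact: hx0. Qed.

Definition pp (v : 'I_s -> int) : {ffun 'I_s -> nat} :=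
  [ffun k => if 0 <= v k then absz (v k) else 0%N].
Definition np (v : 'I_s -> int) : {ffun 'I_s -> nat} :=
  [ffun k => if v k < 0 then absz (v k) else 0%N].

Lemma ppnp v k : (pp v k)%:Z - (np v k)%:Z = v k.
Proof.
by rewrite !ffunE; case: (leP 0 (v k)) => h /=; lia.
Qed.

Lemma conn_v (l : seq T) : (forall t, t \in l -> e t.1.1 t.1.2) ->
  conn (pp (fun k => \sum_(t <- l) sdelta y t k)) (np (fun k => \sum_(t <- l) sdelta y t k)).
Proof. by move=> hl; apply: (conn_comb ncat hl) => k; rewrite ppnp. Qed.

Lemma evalE (M : {ffun 'I_s -> nat}) : (forall k, zb k -> M k = 0%N) ->
  mono_eval M x = expR (\sum_(k | ~~ zb k) (M k)%:R * ln (xs k)).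
Proof.
move=> hM; rewrite expR_sum /mono_eval (bigID zb) /= [X in X * _]big1; last first.
  by move=> k /hM ->; rewrite expr0.
rewrite mul1r; apply: eq_bigr => k hk; rewrite expRM_natl lnK // posrE.
exact: pos_of_nz.
Qed.

Lemma K1 v : conn (pp v) (np v) -> (forall k, zb k -> 0 <= v k) ->
  forall k0, zb k0 -> 0 < v k0 -> False.
Proof.
move=> hc hnn k0 hk0 hpos.
have := conn_eval hxV hc.
have -> : mono_eval (pp v) x = 0.
  rewrite /mono_eval (bigD1 k0) //= ffunE (ltW hpos) (eqP hk0) expr0n absz_eq0.
  by rewrite gt_eqF // mul0r.
have : 0 < mono_eval (np v) x.
  apply: prodr_gt0 => k _; rewrite ffunE; case: ifP => h; last by rewrite expr0.
  apply: exprn_gt0; apply: pos_of_nz; apply/negP => hz.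
  by have := hnn k hz; rewrite leNgt h.
by move=> h1 h2; rewrite -h2 ltxx in h1.
Qed.

Lemma K2 v : conn (pp v) (np v) -> (forall k, zb k -> v k = 0) ->
  \sum_(k | ~~ zb k) (v k)%:~R * ln (xs k) = 0.
Proof.
move=> hc h0.
have := conn_eval hxV hc.
rewrite !evalE; first last.
- by move=> k hk; rewrite ffunE h0 //; case: ifP.
- by move=> k hk; rewrite ffunE h0 //; case: ifP.
move/(congr1 (@ln R)); rewrite !expRK => /eqP; rewrite -subr_eq0 -sumrB => /eqP HH; rewrite -[RHS]HH.
apply: eq_bigr => k _; rewrite -mulrBl; congr (_ * _).
by rewrite -(ppnp v k) intrB !intr_natE.
Qed.

Definition ext (f : 'I_s -> int) : nat -> int :=
  fun k => if insub k is Some i then f i else 0.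

Lemma ext_val f (i : 'I_s) : ext f i = f i.
Proof. by rewrite /ext valK. Qed.

Lemma dot_ext f (u : nat -> R) : dot s (ext f) u = \sum_(k < s) (f k)%:~R * u k.
Proof. by apply: eq_bigr => k _; rewrite ext_val. Qed.

Definition getr (z : ('I_s + T)%type) : option T := if z is inr t then Some t else None.

Lemma sum_pmap_r (V : nmodType) (l : seq ('I_s + T)%type) (f : T -> V) :
  \sum_(t <- pmap getr l) f t = \sum_(z <- l) (if z is inr t then f t else 0).
Proof.
elim: l => [|z l IH]; first by rewrite !big_nil.
by case: z => [k|t] /=; rewrite !big_cons IH ?add0r.
Qed.

Lemma mem_pmap_r (l : seq ('I_s + T)%type) t : t \in pmap getr l -> inr t \in l.
Proof.
elim: l => [|z l IH] //; case: z => [k|t'] /=; rewrite inE.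
  by move/IH => ->; rewrite orbT.
by rewrite inE => /orP [/eqP ->|/IH ->]; rewrite ?eqxx ?orbT.
Qed.

Lemma existsW : exists w : 'I_s -> R, (forall k, zb k -> 0 < w k) /\
  (forall k, ~~ zb k -> w k = 0) /\
  (forall p, e p.1 p.2 -> \sum_k (sdelta y (p, true) k)%:~R * w k = 0).
Proof.
pose X := ('I_s + T)%type.
pose rowA (z : X) : nat -> int := match z with
  | inl k => ext (fun i => (i == k)%:Z)
  | inr t => ext (fun i => if zb i then sdelta y t i else 0) end.
pose strA (z : X) : bool := if z is inl _ then true else false.
pose sysA : seq X := [seq inl k | k <- enum 'I_s & zb k] ++
                     [seq inr t | t <- enum {: T} & e t.1.1 t.1.2].
have [[u0 Hu]|[l [ls [l0 lbad]]]] := @FM R s X rowA (fun _ => 0) strA sysA.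
  exists (fun k => if zb k then u0 k else 0); split; [|split].
  - move=> k hk; rewrite hk.
    have mk : inl k \in sysA.
      by rewrite mem_cat; apply/orP; left; apply: map_f; rewrite mem_filter hk mem_enum.
    have := Hu (inl k) mk; rewrite /=.
    rewrite addr0 dot_ext (bigD1 k) //= eqxx big1 ?addr0; first by rewrite mulr1z mul1r.
    by move=> i /negbTE ->; rewrite mul0r.
  - by move=> k hk; rewrite (negbTE hk).
  move=> p hp.
  have mk : forall b, inr (p, b) \in sysA.
    by move=> b; rewrite mem_cat; apply/orP; right; apply: map_f; rewrite mem_filter hp mem_enum.
  move: (Hu _ (mk true)) (Hu _ (mk false)); rewrite /= !addr0 !dot_ext.
  have -> : \sum_(k < s) ((if zb k then sdelta y (p, false) k else 0)%:~R * u0 k) =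
            - \sum_(k < s) ((if zb k then sdelta y (p, true) k else 0)%:~R * u0 k).
    rewrite -sumrN; apply: eq_bigr => k _.
    by rewrite (sdelta_flip y p true k); case: (zb k); rewrite ?oppr0 ?intrN ?mulNr ?mul0r ?oppr0.
  rewrite oppr_ge0 => q1 q2.
  have -> : \sum_k ((sdelta y (p, true) k)%:~R * (if zb k then u0 k else 0)) =
            \sum_(k < s) ((if zb k then sdelta y (p, true) k else 0)%:~R * u0 k).
    by apply: eq_bigr => k _; case: (zb k); rewrite ?mulr0 ?mul0r.
  by apply/eqP; rewrite eq_le q1 q2.
exfalso.
have hs : has strA l.
  by move: lbad; rewrite /bad big1 //; case: (has strA l) => //; rewrite ltxx.
case/hasP: hs => z zl; case: z zl => [k0|//] k0l _.
have hk0 : zb k0.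
  by move: (ls _ k0l); rewrite mem_cat => /orP [/mapP [k1 + [->]]|/mapP [t _ //]];
     rewrite mem_filter => /andP [].
pose l' := [seq (t.1, ~~ t.2) | t <- pmap getr l].
have hl' : forall t, t \in l' -> e t.1.1 t.1.2.
  move=> t /mapP [t0 /mem_pmap_r /ls] + -> /=.
  rewrite mem_cat => /orP [/mapP [k _ //]|/mapP [t1 + [->]]].
  by rewrite mem_filter => /andP [].
pose v k := \sum_(t <- l') sdelta y t k.
have vE : forall k, v k = - \sum_(z <- l) (if z is inr t then sdelta y t k else 0).
  move=> k; rewrite /v /l' big_map -sum_pmap_r -sumrN; apply: eq_bigr => t _.
  by case: t => p b; rewrite sdelta_flip.
pose A k := \sum_(z <- l) (if z is inl k' then (k == k')%:Z else 0).
have vA : forall k, zb k -> v k = A k.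
  move=> k hk; have := l0 k (ltn_ord k).
  have -> : \sum_(z <- l) rowA z k = A k - v k.
    rewrite vE opprK -big_split; apply: eq_bigr; case=> [k'|t] /=; rewrite ext_val ?hk ?addr0 //.
    by rewrite add0r.
  by move/eqP; rewrite subr_eq0 => /eqP ->.
have A0 : forall k, 0 <= A k.
  by move=> k; apply: sumr_ge0 => -[k'|t] _ //=.
apply: (@K1 v (conn_v hl') _ k0 hk0).
  by move=> k hk; rewrite vA.
rewrite vA // /A (big_rem _ k0l) /= eqxx.
apply: (@lt_le_trans _ _ 1) => //; rewrite lerDl.
by apply: sumr_ge0 => -[k'|t] _ //=.
Qed.

Lemma existsU : exists u : 'I_s -> R, (forall k, ~~ zb k -> u k = ln (xs k)) /\
  (forall p, e p.1 p.2 -> \sum_k (sdelta y (p, true) k)%:~R * u k = 0).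
Proof.
pose rowB (t : T) := ext (fun i => if zb i then sdelta y t i else 0).
pose cstB (t : T) := \sum_(i | ~~ zb i) (sdelta y t i)%:~R * ln (xs i).
pose sysB := [seq t <- enum {: T} | e t.1.1 t.1.2].
have [[u0 Hu]|[l [ls [l0 lbad]]]] := @FM R s T rowB cstB (fun _ => false) sysB.
  exists (fun k => if zb k then u0 k else ln (xs k)); split.
    by move=> k hk; rewrite (negbTE hk).
  move=> p hp.
  have mk : forall b, (p, b) \in sysB.
    by move=> b; rewrite mem_filter hp mem_enum.
  move: (Hu _ (mk true)) (Hu _ (mk false)); rewrite /= !dot_ext /cstB.
  pose Q := \sum_(k < s) ((if zb k then sdelta y (p, true) k else 0)%:~R * u0 k) +
            \sum_(i | ~~ zb i) (sdelta y (p, true) i)%:~R * ln (xs i).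
  have -> : \sum_(k < s) ((if zb k then sdelta y (p, false) k else 0)%:~R * u0 k) +
            \sum_(i | ~~ zb i) (sdelta y (p, false) i)%:~R * ln (xs i) = - Q.
    rewrite /Q opprD -!sumrN; congr (_ + _); apply: eq_bigr => k _;
    by rewrite (sdelta_flip y p true k); case: (zb k); rewrite ?oppr0 ?intrN ?mulNr ?mul0r ?oppr0.
  rewrite oppr_ge0 => q1 q2.
  have -> : \sum_k ((sdelta y (p, true) k)%:~R * (if zb k then u0 k else ln (xs k))) = Q.
    rewrite /Q (bigID zb) /=; congr (_ + _); last by apply: eq_bigr => k /negbTE ->.
    rewrite [RHS](bigID zb) /= [X in _ = _ + X]big1 ?addr0; last by move=> k /negbTE ->; rewrite mul0r.
    by apply: eq_bigr => k ->.
  by apply/eqP; rewrite eq_le q1 q2.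
exfalso.
have hl : forall t, t \in l -> e t.1.1 t.1.2.
  by move=> t /ls; rewrite mem_filter => /andP [].
move: lbad; rewrite /bad.
have -> : has (fun _ => false) l = false by elim: (l) {ls l0 hl}.
have -> : \sum_(t <- l) cstB t = 0.
  rewrite /cstB exchange_big /=.
  rewrite -[RHS](K2 (conn_v hl)); last first.
    move=> k hk; have := l0 k (ltn_ord k); rewrite /rowB.
    by under eq_bigr do rewrite ext_val hk.
  apply: eq_bigr => i _; rewrite intr_sum mulr_suml //.
by rewrite ltxx.
Qed.

Lemma final : closure (event_variety e y `&` @pos_orthant R s) x.
Proof.
have [w [hw1 [hw2 hw3]]] := existsW.
have [u [hu1 hu2]] := existsU.
move=> B /nbhs_ballP [eps eps0 hB].
pose c (N : nat) k := u k - N%:R * w k.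
pose z N : 'rV[R]_s := \row_k expR (c N k).
have zV : forall N, event_variety e y (z N).
  move=> N i j hij.
  have ev : forall M : {ffun 'I_s -> nat}, mono_eval M (z N) = expR (\sum_k (M k)%:R * c N k).
    by move=> M; rewrite expR_sum; apply: eq_bigr => k _; rewrite mxE expRM_natl.
  rewrite !ev; congr expR; apply/eqP; rewrite -subr_eq0 -sumrB; apply/eqP.
  have key : forall p, e p.1 p.2 -> \sum_k (sdelta y (p, true) k)%:~R * c N k = 0.
    move=> p hp; rewrite /c; under eq_bigr do rewrite mulrBr.
    rewrite sumrB (hu2 p hp) sub0r; under eq_bigr do rewrite mulrCA.
    by rewrite -mulr_sumr hw3 // mulr0 oppr0.
  case/orP: hij => h.
    rewrite -[RHS](key (i, j) h); apply: eq_bigr => k _.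
    by rewrite /sdelta /= intrB !intr_natE mulrBl.
  apply/eqP; rewrite -oppr_eq0 -sumrN; apply/eqP; rewrite -[RHS](key (j, i) h); apply: eq_bigr => k _.
  by rewrite /sdelta /= intrB !intr_natE mulrBl opprB.
have zpos : forall N, @pos_orthant R s (z N).
  by move=> N k; rewrite mxE expR_gt0.
pose bd := \sum_(k | zb k) `|(u k - ln eps) / w k|.
have bd0 : 0 <= bd by apply: sumr_ge0.
pose N := Num.Def.archi_bound bd.
have hN : bd < N%:R := archi_boundP bd0.
exists (z N); split; first by split.
apply: hB; split => // i j; rewrite (ord1 i) -ball_normE /= mxE.
case: (boolP (zb j)) => hj.
  rewrite (eqP hj) sub0r normrN gtr0_norm ?expR_gt0 //.
  rewrite -[eps](@lnK _ eps) ?posrE // ltr_expR /c.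
  have hb : (u j - ln eps) / w j < N%:R.
    apply: le_lt_trans hN; apply: le_trans (ler_norm _) _.
    by rewrite /bd (bigD1 j) //= lerDl sumr_ge0.
  have wj := hw1 j hj.
  rewrite ltr_pdivrMr // in hb; lra.
rewrite /c hw2 // mulr0 subr0 hu1 // lnK ?posrE ?pos_of_nz // subrr normr0.
exact: eps0.
Qed.

End Main.

Theorem lemma4p8 (R : realType) (s n : nat) (e : rel 'I_n)
    (y : 'I_n -> {ffun 'I_s -> nat}) :
  (0 < s)%N -> (0 < n)%N -> injective y ->
  weakly_reversible e -> ~ catalytic e y ->
  @event_variety R s n e y `&` @nonneg_orthant R s `<=`
    closure (@event_variety R s n e y `&` @pos_orthant R s).
Proof.
move=> _ _ _ _ hnc x [hxV hx0].
exact: (final hnc hxV hx0).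
Qed.
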